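(* Let $A\subset\mathbb{R}$ be a finite set. Then there exists a subset $A'\subseteq A$ with $|A'|\geq |A|/2$ such that for all $a\in A'$, $$|A(A+a)|\gg |A|^{3/2},$$ where $A(A+a)=\{b(c+a): b,c\in A\}$.
   Context: $X\gg Y$ means $X\geq cY$ for some absolute constant $c>0$ (independent of $A$ and $a$). *)

(* Defs.v *)
From mathcomp Require Import all_boot all_order finmap.
From mathcomp Require Import Rstruct.
From Stdlib Require Import Reals.

Open Scope fset_scope.

Definition prodShift (A : {fset R}) (a : R) : {fset R} :=
  [fset (b * (c + a))%R | b : R in A, c : R in A].

(* Main.v *)
Require Import Defs.
From mathcomp Require Import all_boot all_order finmap.
From mathcomp Require Import Rstruct.
From mathcomp Require Import zify.
From Stdlib Require Import Reals.
From Stdlib Require Import Lra.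
Open Scope fset_scope.

Open Scope nat_scope.

Lemma amgm (a b : nat) : 2 * a * b <= a * a + b * b.
Proof.
wlog ab : a b / a <= b.
  move=> W; case: (leqP a b) => h; first exact: W.
  rewrite addnC mulnAC; apply: W; exact: ltnW.
rewrite -(subnKC ab); set t := b - a; nia.
Qed.

Lemma cs_nat (D : nat) (c : nat -> nat) :
  (\sum_(j < D) c j) * (\sum_(j < D) c j) <= D * \sum_(j < D) (c j) * (c j).
Proof.
elim: D => [|D IH]; first by rewrite !big_ord0.
rewrite !big_ord_recr /=.
set S := \sum_(i < D) c i in IH *; set Q := \sum_(i < D) (c i) * (c i) in IH *.
have H1 : D * (2 * S * c D) <= D * (D * (c D) * (c D) + Q).
  have := amgm (D * c D) S.
  nia.
have H2 : 2 * S * c D <= D * (c D) * (c D) + Q.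
  case: (posnP D) => [D0|Dp].
    have -> : S = 0 by rewrite /S; move: (c); rewrite D0 => c'; rewrite big_ord0.
    by rewrite !muln0 mul0n.
  by rewrite -(leq_pmul2l Dp).
nia.
Qed.

Lemma sum_part {T : eqType} {s : seq T} {d : T -> nat} {D : nat} (F : nat -> nat) :
  (forall x, x \in s -> d x < D) ->
  \sum_(x <- s) F (d x) = \sum_(j < D) count (fun x => d x == j) s * F j.
Proof.
elim: s => [|a s IH] Hs.
  by rewrite big_nil big1 // => j _.
rewrite big_cons IH; last by move=> x Hx; apply: Hs; rewrite inE Hx orbT.
have Ha : d a < D by apply: Hs; rewrite inE eqxx.
have -> : \sum_(j < D) count (fun x => d x == j) (a :: s) * F j =
  \sum_(j < D) ((d a == j) * F j + count (fun x => d x == j) s * F j).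
  by apply: eq_bigr => j _; rewrite /= mulnDl.
rewrite big_split /=; congr (addn _ _).
rewrite (bigD1 (Ordinal Ha)) //= eqxx mul1n big1 ?addn0 // => j Hj.
have -> : (d a == j) = false.
  by apply/negbTE; apply: contra Hj => /eqP H; apply/eqP/val_inj; rewrite /= H.
by [].
Qed.

Definition crossb {T : Type} (r1 r2 : T -> nat) (x y : T) : bool :=
  ((r1 x < r1 y) && (r2 y < r2 x)) || ((r1 y < r1 x) && (r2 x < r2 y)).

Lemma strip_lemma (T : eqType) (s : seq T) (r1 r2 : T -> nat) (n l : nat) :
  0 < l -> uniq s ->
  {in s &, forall x y, r1 x = r1 y -> r2 x = r2 y -> x = y} ->
  (forall x, x \in s -> r1 x < n) -> (forall x, x \in s -> r2 x < n) ->
  (size s) * (size s) <= (2 * (n %/ l)).+1 *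
     (\sum_(x <- s) \sum_(y <- s) crossb r1 r2 x y + l * l * size s).
Proof.
move=> l0 us inj H1 H2.
set D := (2 * (n %/ l)).+1.
pose d x := r1 x %/ l + r2 x %/ l.
pose same x y := (r1 x %/ l == r1 y %/ l) && (r2 x %/ l == r2 y %/ l).
have Hd : forall x, x \in s -> d x < D.
  move=> x Hx; rewrite /d /D.
  have := leq_div2r l (ltnW (H1 x Hx)); have := leq_div2r l (ltnW (H2 x Hx)).
  have := leq_div2r l (leqnSn n).
  have : r1 x %/ l <= n %/ l.
    by apply: leq_div2r; apply: ltnW; apply: H1.
  have : r2 x %/ l <= n %/ l.
    by apply: leq_div2r; apply: ltnW; apply: H2.
  lia.
have pw : forall x y, (d x == d y) <= crossb r1 r2 x y + same x y.
  move=> x y; rewrite /d /same /crossb.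
  case: (eqVneq (d x) (d y)); rewrite /d => E //=.
  have m1 : forall a b, a %/ l < b %/ l -> a < b.
    by move=> a b; apply: contraTT; rewrite -!leqNgt; apply: leq_div2r.
  case: (ltngtP (r1 x %/ l) (r1 y %/ l)) => C1.
  - have C2 : r2 y %/ l < r2 x %/ l by lia.
    by rewrite (m1 _ _ C1) (m1 _ _ C2).
  - have C2 : r2 x %/ l < r2 y %/ l by lia.
    by rewrite (m1 _ _ C1) (m1 _ _ C2) orbT.
  - have C2 : r2 x %/ l = r2 y %/ l by lia.
    by rewrite C2 eqxx addn1.
have sc : forall x, \sum_(y <- s) same x y <= l * l.
  move=> x.
  have -> : \sum_(y <- s) same x y = count (same x) s.
    by rewrite -sum1_count [RHS]big_mkcond; apply: eq_bigr => y _; case: (same x y).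
  rewrite -size_filter.
  set f := fun y => (r1 y, r2 y).
  have U : uniq (map f [seq y <- s | same x y]).
    rewrite map_inj_in_uniq ?filter_uniq // => a b.
    rewrite !mem_filter => /andP [_ ha] /andP [_ hb] [e1 e2]; exact: inj.
  rewrite -(size_map f).
  have <- : size [seq (i, j) | i <- iota (r1 x %/ l * l) l, j <- iota (r2 x %/ l * l) l] = l * l.
    by rewrite size_allpairs !size_iota.
  apply: uniq_leq_size => // p /mapP [y]; rewrite mem_filter => /andP [/andP [/eqP e1 /eqP e2] _] ->.
  apply/allpairsP; exists (r1 y, r2 y) => /=; split => //; rewrite mem_iota.
  - rewrite e1; have := leq_divM (r1 y) l; have := ltn_ceil (r1 y) l0; lia.
  - rewrite e2; have := leq_divM (r2 y) l; have := ltn_ceil (r2 y) l0; lia.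
set c := fun j : nat => count (fun y => d y == j) s.
have E1 : size s = \sum_(j < D) c j.
  rewrite -sum1_size (sum_part (fun _ => 1) Hd).
  by apply: eq_bigr => j _; rewrite muln1.
have E2 : \sum_(x <- s) \sum_(y <- s) (d x == d y) = \sum_(j < D) (c j) * (c j).
  rewrite (eq_bigr (fun x => c (d x))); last first.
    move=> x _; rewrite /c -sum1_count [RHS]big_mkcond; apply: eq_bigr => y _.
    by rewrite eq_sym; case: (d y == d x).
  by rewrite (sum_part c Hd).
have E3 : \sum_(x <- s) \sum_(y <- s) (d x == d y) <=
   \sum_(x <- s) \sum_(y <- s) crossb r1 r2 x y + l * l * size s.
  apply: (@leq_trans (\sum_(x <- s) \sum_(y <- s) (crossb r1 r2 x y + same x y))).
    by apply: leq_sum => x _; apply: leq_sum => y _; apply: pw.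
  rewrite (eq_bigr (fun x => \sum_(y <- s) crossb r1 r2 x y + \sum_(y <- s) same x y)); last first.
    by move=> x _; rewrite big_split.
  rewrite big_split /= leq_add2l -sum1_size big_distrr /=.
  by apply: leq_sum => x _; rewrite muln1.
have := cs_nat D c.
rewrite -E1 -E2 => H.
apply: (leq_trans H); rewrite leq_mul2l E3 orbT //.
Qed.

Definition lval (L : R * R) (x : R) : R := (L.1 * (L.2 + x))%R.
Definition rank (Y : seq R) (y : R) : nat := count (fun z => Rltb z y) Y.

Lemma rank_mono (Y : seq R) y y' : (y <= y')%R -> rank Y y <= rank Y y'.
Proof.
move=> h; rewrite /rank; elim: Y => [|z Y IH] //=.
apply: leq_add => //.
case: (RltbP z y) => hz //; case: (RltbP z y') => // hz'; lra.
Qed.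

Lemma rank_strict (Y : seq R) y y' : y \in Y -> (y < y')%R -> rank Y y < rank Y y'.
Proof.
rewrite /rank; elim: Y => [|z Y IH] //= hy h.
rewrite inE in hy; case/orP: hy => [/eqP e | hy].
  rewrite -e.
  case: (RltbP y y) => hz; first lra.
  case: (RltbP y y') => hz' //.
  have := @rank_mono Y _ _ (Rlt_le _ _ h); rewrite /rank /=; lia.
have := IH hy h.
have : Rltb z y <= Rltb z y'.
  by case: (RltbP z y) => hz //; case: (RltbP z y') => // hz'; lra.
lia.
Qed.

Lemma rank_lt_size (Y : seq R) y : y \in Y -> rank Y y < size Y.
Proof.
rewrite /rank; elim: Y => [|z Y IH] //= hy.
rewrite inE in hy; case/orP: hy => [/eqP e | hy].
  rewrite -e.
  case: (RltbP y y) => hz; first lra.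
  have := count_size (Rltb^~ y) Y; rewrite /=; lia.
have := IH hy; case: (Rltb z y) => /=; lia.
Qed.

Lemma rank_lt_inv (Y : seq R) y y' : y \in Y -> y' \in Y ->
  rank Y y < rank Y y' -> (y < y')%R.
Proof.
move=> hy hy' h; case: (Rlt_le_dec y y') => // c.
have := @rank_mono Y _ _ c; rewrite leqNgt h //.
Qed.

Lemma rank_inj (Y : seq R) y y' : y \in Y -> y' \in Y ->
  rank Y y = rank Y y' -> y = y'.
Proof.
move=> hy hy' h; case: (Rtotal_order y y') => [c|[c|c]] //.
  by have := @rank_strict Y _ _ hy c; rewrite h ltnn.
by have := @rank_strict Y _ _ hy' c; rewrite h ltnn.
Qed.

Definition lines (A : {fset R}) : seq (R * R) :=
  [seq (b, c) | b <- [seq b <- (A : seq R) | b != 0%R], c <- (A : seq R)].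

Lemma lines_uniq A : uniq (lines A).
Proof.
apply: allpairs_uniq; [exact: filter_uniq (fset_uniq A) | exact: fset_uniq |].
by move=> [? ?] [? ?] _ _.
Qed.

Lemma mem_lines A L : L \in lines A -> [/\ L.1 \in A, L.1 <> 0%R & L.2 \in A].
Proof.
case/allpairsP => [[b c] [/= hb hc ->]] /=.
by move: hb; rewrite mem_filter => /andP [/eqP h1 h2].
Qed.

Lemma size_lines A : (#|` A| - 1) * #|` A| <= size (lines A).
Proof.
rewrite /lines size_allpairs size_filter leq_mul2r; apply/orP; right.
have := count_predC (fun b : R => b != 0%R) A.
have : count (predC (fun b : R => b != 0%R)) A <= 1.
  have -> : count (predC (fun b : R => b != 0%R)) A = count_mem 0%R A.
    by apply: eq_count => x /=; rewrite negbK.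
  by rewrite (count_uniq_mem _ (fset_uniq A)); case: (_ \in _).
move=> h1 h2; rewrite -h2 leq_subLR [X in _ <= X]addnC.
exact: leq_add (leqnn _) h1.
Qed.

Lemma lval_mem A L a : L \in lines A -> a \in A -> lval L a \in prodShift A a.
Proof.
move=> /mem_lines [h1 _ h2] ha; rewrite /prodShift /lval.
by apply: (in_imfset2 _ (fun b c : R => (b * (c + a))%R)).
Qed.

Lemma lval_inj A L1 L2 a b : a <> b -> L1 \in lines A -> L2 \in lines A ->
  lval L1 a = lval L2 a -> lval L1 b = lval L2 b -> L1 = L2.
Proof.
case: L1 => [b1 c1]; case: L2 => [b2 c2].
move=> ab /mem_lines [_ n1 _] /mem_lines [_ n2 _]; rewrite /lval /= => e1 e2.
simpl in n1, n2.
have e : ((b1 - b2) * (a - b) = 0)%R.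
  have -> : ((b1 - b2) * (a - b) = (b1 * (c1 + a) - b2 * (c2 + a))
     - (b1 * (c1 + b) - b2 * (c2 + b)))%R by ring.
  rewrite e1 e2; ring.
have eb : b1 = b2.
  case: (Rmult_integral _ _ e) => h; lra.
have ec : c1 = c2.
  rewrite -eb in e1; have := Rmult_eq_reg_l _ _ _ e1 n1; lra.
by rewrite eb ec.
Qed.

Definition crb (a b : R) (L1 L2 : R * R) : bool :=
  Rltb ((lval L1 a - lval L2 a) * (lval L1 b - lval L2 b)) 0.

Lemma affine_once (p q x1 x2 x3 x4 : R) : (x1 < x2)%R -> (x2 <= x3)%R -> (x3 < x4)%R ->
  ((p * x1 + q) * (p * x2 + q) < 0)%R -> ((p * x3 + q) * (p * x4 + q) < 0)%R -> False.
Proof.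
move=> h12 h23 h34 c1 c2.
case: (Rle_dec 0 p) => hp.
- have m12 : (p * x1 + q <= p * x2 + q)%R by nra.
  have m23 : (p * x2 + q <= p * x3 + q)%R by nra.
  have m34 : (p * x3 + q <= p * x4 + q)%R by nra.
  have f2 : (0 < p * x2 + q)%R by nra.
  nra.
- have m12 : (p * x2 + q <= p * x1 + q)%R by nra.
  have m23 : (p * x3 + q <= p * x2 + q)%R by nra.
  have m34 : (p * x4 + q <= p * x3 + q)%R by nra.
  have f2 : (p * x2 + q < 0)%R by nra.
  nra.
Qed.

Lemma crb_once (L1 L2 : R * R) x1 x2 x3 x4 : (x1 < x2)%R -> (x2 <= x3)%R -> (x3 < x4)%R ->
  crb x1 x2 L1 L2 -> crb x3 x4 L1 L2 -> False.
Proof.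
case: L1 => [b1 c1]; case: L2 => [b2 c2].
rewrite /crb /lval /= => h12 h23 h34 /RltbP C1 /RltbP C2.
have E : forall x, (b1 * (c1 + x) - b2 * (c2 + x) = (b1 - b2) * x + (b1 * c1 - b2 * c2))%R.
  by move=> x; ring.
rewrite !E in C1 C2.
exact: (affine_once _ _ _ _ _ _ h12 h23 h34 C1 C2).
Qed.

Lemma sum_once (s : nat) (P : nat -> bool) :
  (forall i j, i < j -> j < s -> P i -> P j -> False) -> \sum_(i < s) P i <= 1.
Proof.
elim: s => [|s IH] H; first by rewrite big_ord0.
rewrite big_ord_recr /=.
case Ps: (P s).
  rewrite big1 // => i _; case Pi: (P i) => //.
  by exfalso; apply: (H i s (ltn_ord i) (ltnSn s) Pi Ps).
rewrite addn0; apply: IH => i j ij js; apply: H => //; exact: ltnW.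
Qed.

Arguments lval_mem {A L a}.
Arguments rank_lt_inv {Y y y'}.
Arguments rank_inj {Y y y'}.
Arguments rank_lt_size {Y y}.
Arguments lval_inj {A L1 L2 a b}.
Lemma cross_le A a b L1 L2 : L1 \in lines A -> L2 \in lines A -> a \in A -> b \in A ->
  crossb (fun L => rank (prodShift A a) (lval L a)) (fun L => rank (prodShift A b) (lval L b)) L1 L2
  <= crb a b L1 L2.
Proof.
move=> h1 h2 ha hb.
have m1a := lval_mem h1 ha; have m2a := lval_mem h2 ha.
have m1b := lval_mem h1 hb; have m2b := lval_mem h2 hb.
case H: (crossb _ _ _ _) => //; rewrite lt0b; apply/RltbP.
move: H; rewrite /crossb => /orP [] /andP [c1 c2].
- have := rank_lt_inv m1a m2a c1; have := rank_lt_inv m2b m1b c2.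
  move: (lval L1 a) (lval L2 a) (lval L1 b) (lval L2 b) => x1 x2 y1 y2 e1 e2; nra.
- have := rank_lt_inv m2a m1a c1; have := rank_lt_inv m1b m2b c2.
  move: (lval L1 a) (lval L2 a) (lval L1 b) (lval L2 b) => x1 x2 y1 y2 e1 e2; nra.
Qed.

Lemma strips_bound (A : {fset R}) (bs : seq R) (n l : nat) :
  0 < l -> sorted <%O bs -> {subset bs <= A} ->
  (forall a, a \in bs -> #|` prodShift A a| < n) ->
  (size bs).-1 * (size (lines A) * size (lines A)) <=
  (2 * (n %/ l)).+1 * (size (lines A) * size (lines A) +
                       (size bs).-1 * (l * l * size (lines A))).
Proof.
move=> l0 so sub hn.
set m := size (lines A); set s := (size bs).-1; set D := (2 * (n %/ l)).+1.
pose al i := nth 0%R bs i.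
have Hin : forall i, i < size bs -> al i \in A.
  by move=> i hi; apply: sub; apply: mem_nth.
have Hs : forall i, i < s -> i.+1 < size bs.
  by move=> i; rewrite /s; case: (size bs) => //= k; lia.
have Hlt : forall i, i < s -> (al i < al i.+1)%R.
  move=> i hi; apply/RltP; rewrite /al (Order.POrderTheory.lt_sorted_ltn_nth 0%R so) ?inE //; [exact: ltnW (Hs _ hi) | exact: Hs].
have Hle : forall i j, i < j -> j < s -> (al i.+1 <= al j)%R.
  move=> i j ij js; apply/RleP; rewrite /al (Order.POrderTheory.lt_sorted_leq_nth 0%R so) ?inE //; [exact: leq_ltn_trans ij (ltnW (Hs _ js)) | exact: ltnW (Hs _ js)].
pose C i := \sum_(L1 <- lines A) \sum_(L2 <- lines A) crb (al i) (al i.+1) L1 L2.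
have strip : forall i, i < s -> m * m <= D * (C i + l * l * m).
  move=> i hi.
  have hi2 : i.+1 < size bs by exact: Hs.
  have hi1 : i < size bs by exact: ltnW.
  have ha := Hin _ hi1; have hb := Hin _ hi2.
  pose r1 := fun L => rank (prodShift A (al i)) (lval L (al i)).
  pose r2 := fun L => rank (prodShift A (al i.+1)) (lval L (al i.+1)).
  have ab : al i <> al i.+1 by have := Hlt i hi; lra.
  have inj : {in lines A &, forall x y, r1 x = r1 y -> r2 x = r2 y -> x = y}.
    move=> x y hx hy e1 e2.
    apply: (lval_inj ab hx hy).
    + exact: (rank_inj (lval_mem hx ha) (lval_mem hy ha) e1).
    + exact: (rank_inj (lval_mem hx hb) (lval_mem hy hb) e2).
  have b1 : forall x, x \in lines A -> r1 x < n.
    move=> x hx; apply: (leq_trans (rank_lt_size (lval_mem hx ha))).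
    apply: ltnW; apply: hn; exact: mem_nth.
  have b2 : forall x, x \in lines A -> r2 x < n.
    move=> x hx; apply: (leq_trans (rank_lt_size (lval_mem hx hb))).
    apply: ltnW; apply: hn; exact: mem_nth.
  have := @strip_lemma _ (lines A) r1 r2 n l l0 (lines_uniq A) inj b1 b2.
  move=> H; apply: (leq_trans H); rewrite leq_mul2l; apply/orP; right.
  rewrite leq_add2r big_seq [X in _ <= X]big_seq; apply: leq_sum => L1 h1.
  rewrite big_seq [X in _ <= X]big_seq; apply: leq_sum => L2 h2.
  exact: (@cross_le A _ _ _ _ h1 h2 ha hb).
have tot : \sum_(i < s) C i <= m * m.
  rewrite /C.
  rewrite exchange_big /=.
  under eq_bigr => L1 _ do rewrite exchange_big /=.
  have -> : m * m = \sum_(L1 <- lines A) \sum_(L2 <- lines A) 1.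
    by rewrite /m -!sum1_size big_distrl /=; apply: eq_bigr => L1 _; rewrite mul1n.
  apply: leq_sum => L1 _; apply: leq_sum => L2 _.
  apply: (@sum_once s (fun i => crb (al i) (al i.+1) L1 L2)) => i j ij js Pi Pj.
  exact: (crb_once _ _ _ _ _ _ (Hlt i (ltn_trans ij js)) (Hle i j ij js) (Hlt j js) Pi Pj).
have -> : s * (m * m) = \sum_(i < s) m * m by rewrite sum_nat_const card_ord.
apply: (@leq_trans (\sum_(i < s) D * (C i + l * l * m))).
  by apply: leq_sum => i _; apply: strip.
rewrite -big_distrr /= leq_mul2l; apply/orP; right.
rewrite big_split /= sum_nat_const card_ord.
by rewrite leq_add2r.
Qed.

Definition goodset (A : {fset R}) : {fset R} :=
  [fset a in A | Nat.sqrt #|` A| * #|` A| <= 64 * #|` prodShift A a|].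

Lemma goodsetP A x :
  x \in goodset A = (x \in A) && (Nat.sqrt #|` A| * #|` A| <= 64 * #|` prodShift A x|).
Proof. by rewrite /goodset !inE. Qed.

Lemma goodset_sub A : goodset A `<=` A.
Proof. by apply/fsubsetP => x; rewrite goodsetP => /andP []. Qed.

Lemma mem_size_gt0 (T : eqType) (s : seq T) x : x \in s -> 0 < size s.
Proof. by case: s. Qed.

Lemma self_mem {A x} : x \in A -> 0 < #|` prodShift A x|.
Proof.
move=> hx; apply: (@mem_size_gt0 _ _ (x * (x + x))%R).
by apply: (in_imfset2 _ (fun b c : R => (b * (c + x))%R)).
Qed.

Lemma bad_small A : 2 * #|` A `\` goodset A| <= #|` A|.
Proof.
set k := #|` A|; set t := Nat.sqrt k; set B := A `\` goodset A.
have [st1 st2] := Nat.sqrt_spec k (Nat.le_0_l k).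
rewrite -/t in st1 st2.
case: (leqP (2 * #|` B|) k) => // hB; exfalso.
have hBA : #|` B| <= k by apply: fsubset_leq_card; apply: fsubsetDl.
have inB : forall x, x \in B -> x \in A /\ 64 * #|` prodShift A x| < t * k.
  move=> x; rewrite in_fsetD goodsetP => /andP [h1 h2]; rewrite h2 /= in h1.
  by split => //; rewrite ltnNge.
have B0 : 0 < #|` B| by lia.
pose x0 := nth 0%R (B : seq R) 0.
have hx0 : x0 \in B by apply: mem_nth.
have [hx0A hx0b] := inB _ hx0.
have N1 := self_mem hx0A.

have tk64 : 64 <= t * k by lia.
have k16 : 16 <= k.
  case: (leqP 16 k) => // hk.
  have : t <= 3 by nia.
  nia.
have t0 : 0 < t by nia.
set n := (t * k) %/ 64 + 1.
have hn64 : 64 * n <= t * k + 64.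
  have := leq_divM (t * k) 64; rewrite /n; lia.
set bs := sort <=%O (B : seq R).
have so : sorted <%O bs by rewrite Order.TotalTheory.sort_lt_sorted fset_uniq.
have sub : {subset bs <= A}.
  by move=> x; rewrite /bs mem_sort => /inB [].
have hn : forall a, a \in bs -> #|` prodShift A a| < n.
  move=> a; rewrite /bs mem_sort => /inB [_ h].
  rewrite /n addn1 ltnS leq_divRL //; lia.
have := @strips_bound A bs n t t0 so sub hn.
rewrite /bs size_sort.
set m := size (lines A); set q := n %/ t; set s := #|` B|.-1.
move=> H.
have hm : (k - 1) * k <= m by apply: size_lines.
have m0 : 0 < m by nia.
have hs : s.+1 = #|` B| by rewrite /s; lia.
have h1 : s * (t * t * m) <= m * m.
  rewrite mulnA leq_mul2r; apply/orP; right.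
  have : s * (t * t) <= (k - 1) * k by apply: leq_mul; lia.
  lia.
have h2 : s * (m * m) <= (2 * (2 * q).+1) * (m * m).
  apply: (leq_trans H); apply: (@leq_trans ((2 * q).+1 * (2 * (m * m)))); last by nia.
  rewrite leq_mul2l; apply/orP; right; lia.
have mm0 : 0 < m * m by rewrite muln_gt0 m0.
have h3 : s <= 2 * (2 * q).+1 by rewrite -(leq_pmul2r mm0).
have hq : q * t <= n by apply: leq_divM.
have e1 : 16 * t * s <= 64 * (q * t) + 32 * t by nia.
have e2 : 8 * t * k <= 16 * t * s + 8 * t by nia.
nia.
Qed.

Lemma half A : (INR #|` A| / 2 <= INR #|` goodset A|)%R.
Proof.
have h := bad_small A.
have hs := fsubset_leq_card (goodset_sub A).
rewrite (cardfsDS (goodset_sub A)) in h.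
have hn : (#|` A| <= 2 * #|` goodset A|)%coq_nat by lia.
have := le_INR _ _ hn; rewrite mult_INR /=; lra.
Qed.

Lemma good_bound A a : a \in goodset A ->
  ((1 / 128) * (INR #|` A| * sqrt (INR #|` A|)) <= INR #|` prodShift A a|)%R.
Proof.
rewrite goodsetP => /andP [ha hg].
set k := #|` A| in hg *; set t := Nat.sqrt k in hg.
set N := #|` prodShift A a| in hg *.
have [st1 st2] := Nat.sqrt_spec k (Nat.le_0_l k).
rewrite -/t in st1 st2.
have k0 : 0 < k by exact: (@mem_size_gt0 _ _ a ha).
have t0 : 0 < t by nia.
have hk : (k <= (2 * t) * (2 * t))%coq_nat by nia.
have hsq : (sqrt (INR k) <= INR (2 * t)%coq_nat)%R.
  rewrite -(sqrt_square (INR (2 * t)%coq_nat)); last exact: pos_INR.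
  apply: sqrt_le_1_alt; rewrite -mult_INR; exact: le_INR.
have hg' : ((2 * t) * k <= 128 * N)%coq_nat by lia.
have := le_INR _ _ hg'; rewrite !mult_INR.
have -> : INR 128 = 128%R by rewrite INR_IZR_INZ.
move=> H.
have kp : (0 <= INR k)%R by exact: pos_INR.
have : (INR k * sqrt (INR k) <= INR k * INR (2 * t)%coq_nat)%R.
  by apply: Rmult_le_compat_l.
rewrite mult_INR in H *.
nra.
Qed.

Open Scope fset_scope.

Theorem theorem2p9 :
  exists c : R, (0 < c)%R /\
  forall A : {fset R},
  exists A' : {fset R}, A' `<=` A /\
    (INR #|` A| / 2 <= INR #|` A'|)%R /\
    forall a : R, a \in A' ->
      (c * (INR #|` A| * sqrt (INR #|` A|)) <= INR #|` prodShift A a|)%R.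
Proof.
exists (1 / 128)%R; split; first lra.
move=> A; exists (goodset A); split; first exact: goodset_sub.
split; first exact: half.
move=> a ha; exact: good_bound.
Qed.
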